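(* Let $A$ and $B$ be rings, $f: A\to B$ an injective ring homomorphism and $J$ a proper ideal of $B$. (i) If $f(A)\cap J=\{0\}$, then $A\bowtie^{f}J$ is a weak Armendariz ring if and only if $f(A)+J$ is a weak Armendariz ring. (ii) If $J\subseteq\mathrm{nil}(B)$ and $f(A)+J$ is a weak Armendariz ring, then $A\bowtie^{f}J$ is a weak Armendariz ring.
   Context: All rings are associative with identity (not necessarily commutative), ring homomorphisms are unital, and ideals are two-sided. $\mathrm{nil}(R)$ denotes the set of nilpotent elements of a ring $R$. For a ring homomorphism $f:A\to B$ and an ideal $J$ of $B$, the amalgamation is the subring $A\bowtie^{f}J=\{(a,f(a)+j)\mid a\in A,\ j\in J\}$ of $A\times B$; $f(A)+J=\{f(a)+j: a\in A, j\in J\}$ is a subring of $B$. A ring $R$ is weak Armendariz if whenever $p(x)=\sum_{i=0}^n a_ix^i$ and $q(x)=\sum_{j=0}^m b_jx^j$ in $R[x]$ satisfy $p(x)q(x)=0$, then $a_ib_j\in\mathrm{nil}(R)$ for all $i,j$. *)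

(* Defs.v *)
From HB Require Import structures.
From mathcomp Require Import all_boot all_order all_algebra.
Set Implicit Arguments. Unset Strict Implicit. Unset Printing Implicit Defensive.
Import GRing.Theory.
Local Open Scope ring_scope.

Definition is_nil {R : nzRingType} (x : R) : Prop := exists n : nat, x ^+ n = 0.

Definition is_two_sided_ideal {R : nzRingType} (J : R -> Prop) : Prop :=
  [/\ J 0,
      (forall x y, J x -> J y -> J (x + y)),
      (forall x, J x -> J (- x)),
      (forall r x, J x -> J (r * x)) &
      (forall r x, J x -> J (x * r))].

Definition proper_two_sided_ideal {R : nzRingType} (J : R -> Prop) : Prop :=
  is_two_sided_ideal J /\ ~ J 1.

(* A subring S (given as a predicate on R) is weak Armendariz: this is the
   definition of weak Armendariz applied to the ring S itself, written inside R:
   polynomials over S are the polynomials of R[x] with all coefficients in S,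
   products in S[x] are products in R[x], and nilpotency in S coincides with
   nilpotency in R. *)
Definition weak_armendariz_sub {R : nzRingType} (S : R -> Prop) : Prop :=
  forall p q : {poly R},
    (forall i, S p`_i) -> (forall j, S q`_j) -> p * q = 0 ->
    forall i j, is_nil (p`_i * q`_j).

Definition amalg {A B : nzRingType} (f : A -> B) (J : B -> Prop) : A * B -> Prop :=
  fun x => exists a j, J j /\ x = (a, f a + j).

Definition fA_plus_J {A B : nzRingType} (f : A -> B) (J : B -> Prop) : B -> Prop :=
  fun b => exists a j, J j /\ b = f a + j.

(* Main.v *)
Require Import Defs.
From HB Require Import structures.
From mathcomp Require Import all_boot all_order all_algebra.
From Stdlib Require Import ClassicalEpsilon.
Import GRing.Theory.
Local Open Scope ring_scope.

Section Aux.
Variables (A B : nzRingType) (f : {rmorphism A -> B}) (J : B -> Prop).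
Hypothesis HJ : is_two_sided_ideal J.

Lemma L1 (x l : B) n : J l -> exists l', J l' /\ (x + l) ^+ n = x ^+ n + l'.
Proof.
move: HJ => [J0 JD JN JMl JMr]; move=> Jl.
elim: n => [|n [l' [Jl' E]]]; first by exists 0; rewrite !expr0 addr0.
exists (x ^+ n * l + l' * x + l' * l); split.
  by apply: (JD); [apply: (JD); [apply: (JMl)|apply: (JMr)]|apply: (JMr)].
by rewrite exprSr E exprSr !mulrDl !mulrDr !addrA.
Qed.

Lemma Jsum (n : nat) (F : 'I_n -> B) : (forall i, J (F i)) -> J (\sum_(i < n) F i).
Proof.
move: HJ => [J0 JD JN JMl JMr]; move=> H.
by apply: (big_ind J) => // i _; apply: H.
Qed.

Lemma L2 (u v : {poly B}) : (forall i, J u`_i) ->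
  forall k, J (u * v)`_k /\ J (v * u)`_k.
Proof.
move=> Hu k; move: HJ => [J0 JD JN JMl JMr].
by rewrite !coefM; split; apply: Jsum => i; [apply: (JMr)|apply: (JMl)].
Qed.

Lemma Lnil (a : A) l n : J l -> (f a + l) ^+ n = 0 -> J (f (a ^+ n)).
Proof.
move=> Jl E; have [l' [Jl' E']] := L1 (f a) l n Jl.
move: HJ => [J0 JD JN JMl JMr].
have -> : f (a ^+ n) = - l'.
  by apply/eqP; rewrite rmorphXn -subr_eq0 opprK -E' E.
by apply: (JN).
Qed.

Lemma fstX (z : A * B) n : (z ^+ n).1 = z.1 ^+ n.
Proof. by elim: n => [|n IH]; rewrite ?expr0 // !exprS /= IH. Qed.
Lemma sndX (z : A * B) n : (z ^+ n).2 = z.2 ^+ n.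
Proof. by elim: n => [|n IH]; rewrite ?expr0 // !exprS /= IH. Qed.

Lemma pair0 (z : A * B) : z.1 = 0 -> z.2 = 0 -> z = 0.
Proof. by case: z => ? ? /= -> ->. Qed.

Lemma back : (forall a, J (f a) -> is_nil a) ->
  weak_armendariz_sub (fA_plus_J f J) -> weak_armendariz_sub (amalg f J).
Proof.
move=> Hf W P Q HP HQ PQ i j.
pose p := map_poly snd P; pose q := map_poly snd Q.
have Hp : forall i, fA_plus_J f J p`_i.
  move=> k; rewrite coef_map; have [a [l [Jl ->]]] := HP k.
  by exists a, l.
have Hq : forall i, fA_plus_J f J q`_i.
  move=> k; rewrite coef_map; have [a [l [Jl ->]]] := HQ k.
  by exists a, l.
have pq : p * q = 0 by rewrite -rmorphM /= PQ rmorph0.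
have [n En] := W p q Hp Hq pq i j.
move: En; rewrite /p /q !coef_map.
have [a [l [Jl ->]]] := HP i; have [b [k [Jk ->]]] := HQ j.
rewrite /= => En.
have [l2 Hl2] : exists l2, J l2 /\ (f a + l) * (f b + k) = f (a * b) + l2.
  move: HJ => [J0 JD JN JMl JMr].
  exists (f a * k + l * (f b + k)); split; first by apply: (JD); [apply: (JMl)|apply: (JMr)].
  by rewrite rmorphM mulrDl mulrDr addrA.
case: Hl2 => Jl2 E2; rewrite E2 in En.
have [m Em] := Hf _ (Lnil (a * b) l2 n Jl2 En).
exists (n * m + n)%N; apply: pair0.
  by rewrite fstX /= exprD exprM Em mul0r.
by rewrite sndX /= E2 exprD En mulr0.
Qed.

End Aux.

Theorem theorem4p1 (A B : nzRingType) (f : {rmorphism A -> B}) (J : B -> Prop) :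
  injective f -> proper_two_sided_ideal J ->
  ((forall a : A, J (f a) -> f a = 0) ->
     (weak_armendariz_sub (amalg f J) <-> weak_armendariz_sub (fA_plus_J f J)))
  /\
  ((forall b : B, J b -> is_nil b) -> weak_armendariz_sub (fA_plus_J f J) ->
     weak_armendariz_sub (amalg f J)).
Proof.
move=> finj [HJ _]; split; last first.
  move=> Hn; apply: back => // a /Hn [m Em].
  exists m; apply: finj; by rewrite rmorphXn Em rmorph0.
move=> H0.
have Hz : forall a, J (f a) -> a = 0.
  by move=> a /H0 E; apply: finj; rewrite E rmorph0.
split; last first.
  by apply: back => // a /Hz ->; exists 1%N; rewrite expr1.
move=> W p q Hp Hq pq i j.
have cp : forall i, {a | exists l, J l /\ p`_i = f a + l} :=
  fun i => constructive_indefinite_description _ (Hp i).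
have cq : forall i, {a | exists l, J l /\ q`_i = f a + l} :=
  fun i => constructive_indefinite_description _ (Hq i).
pose g i := sval (cp i); pose h i := sval (cq i).
have Hg : forall i, exists l, J l /\ p`_i = f (g i) + l := fun i => svalP (cp i).
have Hh : forall i, exists l, J l /\ q`_i = f (h i) + l := fun i => svalP (cq i).
have [J0 JD JN JMl JMr] := HJ.
have gen : forall (r : {poly B}) (g : nat -> A),
    (forall i, exists l, J l /\ r`_i = f (g i) + l) ->
    forall k, (\poly_(i < size r) ((g i, r`_i) : A * B))`_k = (g k, r`_k).
  move=> r g0 Hg0 k; rewrite coef_poly; case: ltnP => // Hk.
  have pk0 : r`_k = 0 := nth_default 0 Hk.
  have [l [Jl E]] := Hg0 k; rewrite pk0 in E.
  suff -> : g0 k = 0 by rewrite pk0.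
  apply: Hz; have -> : f (g0 k) = - l by apply/eqP; rewrite -subr_eq0 opprK -E.
  exact: (JN).
pose P := \poly_(i < size p) ((g i, p`_i) : A * B).
pose Q := \poly_(i < size q) ((h i, q`_i) : A * B).
have PE : forall k, P`_k = (g k, p`_k) := gen p g Hg.
have QE : forall k, Q`_k = (h k, q`_k) := gen q h Hh.
have HP : forall k, amalg f J P`_k.
  by move=> k; rewrite PE; have [l [Jl E]] := Hg k; exists (g k), l; rewrite E.
have HQ : forall k, amalg f J Q`_k.
  by move=> k; rewrite QE; have [l [Jl E]] := Hh k; exists (h k), l; rewrite E.
have mP : map_poly snd P = p by apply/polyP => k; rewrite coef_map PE.
have mQ : map_poly snd Q = q by apply/polyP => k; rewrite coef_map QE.
pose u := map_poly f (map_poly fst P); pose v := map_poly f (map_poly fst Q).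
have Jd : forall k, J (p - u)`_k.
  move=> k; rewrite coefB !coef_map PE /=; have [l [Jl ->]] := Hg k.
  by rewrite addrC addKr.
have Je : forall k, J (q - v)`_k.
  move=> k; rewrite coefB !coef_map QE /=; have [l [Jl ->]] := Hh k.
  by rewrite addrC addKr.
have uv : u * v = p * q - (u * (q - v) + (p - u) * q).
  by rewrite mulrBr mulrBl [X in _ - X]addrC addrA subrK opprB addrC subrK.
have PQ : P * Q = 0.
  apply/polyP => k; rewrite coef0; apply: pair0.
    apply: Hz; rewrite -(coef_map fst) -(coef_map f) !rmorphM /= -/u -/v uv pq.
    rewrite sub0r coefN coefD; apply: (JN); apply: (JD).
      by case: (@L2 _ _ HJ (q - v) u Je k).
    by case: (@L2 _ _ HJ (p - u) q Jd k).
  by rewrite -(coef_map snd) rmorphM /= mP mQ pq coef0.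
have [n En] := W P Q HP HQ PQ i j.
exists n; move: (congr1 snd En); rewrite sndX PE QE /=.
by [].
Qed.
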